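(* Let $C\in\mathbb{R}^{n\times n}$ be symmetric and let $Z$ be an optimal solution of $$\max_{Z}\ \langle C,Z\rangle\quad\text{s.t. } Z_{ii}=1\ (i=1,\dots,n),\ Z\succeq0.$$ Define $w\in\mathbb{R}^n$ by $w_i=\dfrac{Z_i^TZC_i}{Z_i^TZ_i}$ for $i=1,\dots,n$. Then $w$ is an optimal solution of $$\min_{w\in\mathbb{R}^n}\ \mathbf{1}^Tw\quad\text{s.t. } \operatorname{Diag}(w)\succeq C.$$
   Context: $Z_i$ and $C_i$ denote the $i$-th columns of $Z$ and $C$ (equivalently rows, by symmetry); $\operatorname{Diag}(w)$ is the diagonal matrix with diagonal $w$; $\langle C,Z\rangle=\operatorname{tr}(CZ)$; $\mathbf 1$ is the all-ones vector. *)

(* Defs.v *)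
From HB Require Import structures.
From mathcomp Require Import all_boot all_order all_algebra.
From mathcomp Require Export reals.
Set Implicit Arguments. Unset Strict Implicit. Unset Printing Implicit Defensive.
Import Order.TTheory GRing.Theory Num.Theory.
Local Open Scope ring_scope.

Definition psd (R : realType) (n : nat) (A : 'M[R]_n) : Prop :=
  A^T = A /\ forall x : 'cV[R]_n, 0 <= (x^T *m A *m x) 0 0.

Definition frob (R : realType) (n : nat) (C Z : 'M[R]_n) : R := \tr (C *m Z).

Definition primal_feasible (R : realType) (n : nat) (Z : 'M[R]_n) : Prop :=
  (forall i, Z i i = 1) /\ psd Z.

Definition primal_optimal (R : realType) (n : nat) (C Z : 'M[R]_n) : Prop :=
  primal_feasible Z /\
  forall Z' : 'M[R]_n, primal_feasible Z' -> frob C Z' <= frob C Z.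

Definition dual_feasible (R : realType) (n : nat) (C : 'M[R]_n) (w : 'rV[R]_n)
  : Prop := psd (diag_mx w - C).

Definition ones_dot (R : realType) (n : nat) (w : 'rV[R]_n) : R := \sum_i w 0 i.

Definition dual_optimal (R : realType) (n : nat) (C : 'M[R]_n) (w : 'rV[R]_n)
  : Prop :=
  dual_feasible C w /\
  forall w' : 'rV[R]_n, dual_feasible C w' -> ones_dot w <= ones_dot w'.

Definition w_of (R : realType) (n : nat) (C Z : 'M[R]_n) : 'rV[R]_n :=
  \row_i (((col i Z)^T *m Z *m col i C) 0 0 / ((col i Z)^T *m col i Z) 0 0).

(* Main.v *)
Require Import Defs.
From HB Require Import structures.
From mathcomp Require Import all_boot all_order all_algebra.
From mathcomp Require Import reals.
From mathcomp Require Import ring lra.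
Set Implicit Arguments. Unset Strict Implicit. Unset Printing Implicit Defensive.
Import Order.TTheory GRing.Theory Num.Theory.
Local Open Scope ring_scope.

Definition bf (R : realType) (n : nat) (A : 'M[R]_n) (x y : 'cV[R]_n) : R :=
  (x^T *m A *m y) 0 0.

Lemma bfDl (R : realType) n (A : 'M[R]_n) x1 x2 y :
  bf A (x1 + x2) y = bf A x1 y + bf A x2 y.
Proof. by rewrite /bf linearD /= !mulmxDl mxE. Qed.
Lemma bfDr (R : realType) n (A : 'M[R]_n) x y1 y2 :
  bf A x (y1 + y2) = bf A x y1 + bf A x y2.
Proof. by rewrite /bf !mulmxDr mxE. Qed.
Lemma bfZl (R : realType) n (A : 'M[R]_n) a x y :
  bf A (a *: x) y = a * bf A x y.
Proof. by rewrite /bf linearZ /= -!scalemxAl mxE. Qed.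
Lemma bfZr (R : realType) n (A : 'M[R]_n) a x y :
  bf A x (a *: y) = a * bf A x y.
Proof. by rewrite /bf -!scalemxAr mxE. Qed.
Lemma bfNl (R : realType) n (A : 'M[R]_n) x y :
  bf A (- x) y = - bf A x y.
Proof. by rewrite -scaleN1r bfZl mulN1r. Qed.
Lemma bfNr (R : realType) n (A : 'M[R]_n) x y :
  bf A x (- y) = - bf A x y.
Proof. by rewrite -scaleN1r bfZr mulN1r. Qed.
Lemma bf_sym (R : realType) n (A : 'M[R]_n) x y :
  A^T = A -> bf A x y = bf A y x.
Proof.
move=> sA; rewrite /bf -[in LHS](trmxK (x^T *m A *m y)) mxE.
by rewrite !trmx_mul trmxK sA mulmxA.
Qed.
Lemma bf_el (R : realType) n (A : 'M[R]_n) j y :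
  bf A (delta_mx j 0) y = (A *m y) j 0.
Proof. by rewrite /bf trmx_delta -mulmxA -rowE mxE. Qed.
Lemma bf_ee (R : realType) n (A : 'M[R]_n) j k :
  bf A (delta_mx j 0) (delta_mx k 0) = A j k.
Proof. by rewrite bf_el -colE !mxE. Qed.

Lemma quad_cs (R : realType) (a b c : R) :
  0 <= c -> (forall t, 0 <= a + 2 * t * b + t ^+ 2 * c) -> b ^+ 2 <= a * c.
Proof.
move=> c0 H.
have [cgt|] := ltrP 0 c.
  have := H (- (b / c)). set u := b / c.
  have uc : u * c = b by rewrite /u divfK // gt_eqF.
  move=> Hu. nra.
move=> cle; have c0' : c = 0 by apply/eqP; rewrite eq_le cle c0.
subst c. rewrite mulr0.
have [b0|bn0] := eqVneq b 0; first by rewrite b0 expr0n.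
have := H (- ((a + 1) / (2 * b))). set u := (a + 1) / (2 * b).
have ub : u * (2 * b) = a + 1 by rewrite /u divfK // mulf_neq0 // pnatr_eq0.
move=> Hu. nra.
Qed.

Lemma psd_cs (R : realType) n (A : 'M[R]_n) x y :
  psd A -> bf A x y ^+ 2 <= bf A x x * bf A y y.
Proof.
move=> [sA pA]; apply: quad_cs; first exact: pA.
move=> t; have := pA (x + t *: y).
rewrite -/(bf A _ _) !(bfDl, bfDr, bfZl, bfZr).
move=> h; apply: (le_trans h); rewrite le_eqVlt; apply/orP; left; apply/eqP.
rewrite [bf A y x]bf_sym //; ring.
Qed.

Lemma psd_col0 (R : realType) n (A : 'M[R]_n) x :
  psd A -> bf A x x = 0 -> A *m x = 0.
Proof.
move=> pA h; apply/matrixP => k j; rewrite (ord1 j) [RHS]mxE -bf_el.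
have := psd_cs (delta_mx k 0) x pA; rewrite h mulr0 => H.
by apply/eqP; rewrite -sqrf_eq0 eq_le H sqr_ge0.
Qed.

Lemma psd_diag0 (R : realType) n (A : 'M[R]_n) j k :
  psd A -> A j j = 0 -> A k j = 0.
Proof.
move=> pA h; have := psd_cs (delta_mx k 0) (delta_mx j 0) pA.
rewrite !bf_ee h mulr0 => H.
by apply/eqP; rewrite -sqrf_eq0 eq_le H sqr_ge0.
Qed.

Lemma psd_diag_ge0 (R : realType) n (A : 'M[R]_n) j : psd A -> 0 <= A j j.
Proof. by move=> [_ pA]; rewrite -bf_ee; apply: pA. Qed.

Lemma psd_congr (R : realType) n (Z F : 'M[R]_n) :
  psd Z -> psd (F^T *m Z *m F).
Proof.
move=> [sZ pZ]; split.
  by rewrite !trmx_mul trmxK sZ mulmxA.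
move=> x; have := pZ (F *m x); congr (_ <= _).
by rewrite trmx_mul !mulmxA.
Qed.

Lemma mx11_mul (R : realType) (a b : 'M[R]_1) : (a *m b) 0 0 = a 0 0 * b 0 0.
Proof. by rewrite mxE big_ord1. Qed.

Lemma psd_rank1 (R : realType) n (y : 'cV[R]_n) : psd (y *m y^T).
Proof.
split; first by rewrite trmx_mul trmxK.
move=> x; rewrite mulmxA -mulmxA mx11_mul.
have -> : (y^T *m x) = (x^T *m y)^T by rewrite trmx_mul trmxK.
by rewrite [(_^T) 0 0]mxE -expr2 sqr_ge0.
Qed.

Lemma psd_add (R : realType) n (A B : 'M[R]_n) : psd A -> psd B -> psd (A + B).
Proof.
move=> [sA pA] [sB pB]; split; first by rewrite linearD /= sA sB.
by move=> x; rewrite mulmxDr mulmxDl mxE addr_ge0.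
Qed.

Lemma psd_scale (R : realType) n (A : 'M[R]_n) a : 0 <= a -> psd A -> psd (a *: A).
Proof.
move=> a0 [sA pA]; split; first by rewrite linearZ /= sA.
by move=> x; rewrite -scalemxAr -scalemxAl mxE mulr_ge0.
Qed.

Lemma tr_rank1 (R : realType) n (P : 'M[R]_n) u v :
  \tr (P *m (u *m v^T)) = bf P v u.
Proof. by rewrite mulmxA mxtrace_mulC trace_mx11 /bf mulmxA. Qed.

Lemma quad_rank1 (R : realType) n (u x : 'cV[R]_n) :
  (x^T *m (u *m u^T) *m x) 0 0 = ((u^T *m x) 0 0) ^+ 2.
Proof.
rewrite mulmxA -mulmxA mx11_mul.
have -> : (x^T *m u) = (u^T *m x)^T by rewrite trmx_mul trmxK.
by rewrite [(_^T) 0 0]mxE -expr2.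
Qed.

Lemma entry_subZ (R : realType) m p (A B : 'M[R]_(m,p)) c i j :
  (A - c *: B) i j = A i j - c * B i j.
Proof. by rewrite !mxE. Qed.

Lemma psd_sym_entry (R : realType) n (A : 'M[R]_n) j k : psd A -> A j k = A k j.
Proof. by move=> [sA _]; rewrite -{1}sA mxE. Qed.

Lemma tr_psd_ge0 (R : realType) n (P Z : 'M[R]_n) :
  psd P -> psd Z -> 0 <= \tr (P *m Z).
Proof.
move=> pP.
suff H : forall (m : nat) (Z : 'M[R]_n), psd Z -> (#|[set j | Z j j != 0%R]| <= m)%N ->
  0 <= \tr (P *m Z).
  by move=> pZ; exact: (H _ Z pZ (leqnn _)).
have Z0 : forall Z : 'M[R]_n, psd Z -> (forall j, Z j j = 0 :> R) -> 0 <= \tr (P *m Z).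
  move=> Z' pZ H0; have -> : Z' = 0.
    by apply/matrixP => k j; rewrite [RHS]mxE; apply: psd_diag0; [exact: pZ | exact: H0].
  by rewrite mulmx0 mxtrace0.
clear Z; elim=> [|m IH] Z pZ hc.
  apply: Z0 => // j; move: hc; rewrite leqn0 cards_eq0 => /eqP E.
  have : j \notin [set j | Z j j != 0] by rewrite E in_set0.
  by rewrite inE negbK => /eqP.
case: (pickP [pred j | Z j j != 0]) => [j /= Hj | H0]; last first.
  by apply: Z0 => // j; have := H0 j => /= /negbFE /eqP.
have Zjj : 0 < Z j j by rewrite lt_def Hj psd_diag_ge0.
set v := col j Z.
set c := (Z j j)^-1.
set Z' := Z - c *: (v *m v^T).
have vx : forall x, (v^T *m x) 0 0 = bf Z (delta_mx j 0) x.
  move=> x; rewrite /v colE /bf trmx_mul !trmx_delta.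
  by case: pZ => -> _.
have pZ' : psd Z'.
  split.
    rewrite /Z' linearB /= linearZ /= trmx_mul trmxK.
    by case: pZ => -> _.
  move=> x; rewrite /Z' mulmxBr mulmxBl -scalemxAr -scalemxAl entry_subZ.
  rewrite quad_rank1 vx -/(bf Z x x).
  have := psd_cs (delta_mx j 0) x pZ; rewrite bf_ee => h.
  rewrite subr_ge0 /c ler_pdivrMl //.
have eZ : \tr (P *m Z) = \tr (P *m Z') + c * \tr (P *m (v *m v^T)).
  by rewrite /Z' mulmxBr linearB /= -scalemxAr linearZ /= subrK.
rewrite eZ; apply: addr_ge0.
  apply: (IH _ pZ').
  have sub : [set k | Z' k k != 0] \subset [set k | Z k k != 0] :\ j.
    apply/subsetP => k; rewrite !inE /Z' entry_subZ mxE big_ord1 !mxE.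
    have [->|kj] := eqVneq k j.
      by rewrite /c mulrA mulVf ?mul1r ?subrr ?eqxx // gt_eqF.
    rewrite /=; apply: contra => /eqP Zkk.
    have : Z j k = 0 by apply: psd_diag0.
    by rewrite psd_sym_entry // => ->; rewrite Zkk !mulr0 subrr.
  apply: leq_trans (subset_leq_card sub) _.
  have := cardsD1 j [set k | Z k k != 0]; rewrite inE Hj /= add1n => E.
  by move: hc; rewrite E ltnS.
rewrite tr_rank1 mulr_ge0 //.
  by rewrite invr_ge0 ltW.
by case: pP => _ h; apply: h.
Qed.

Lemma tr_diag_mul (R : realType) n (d : 'rV[R]_n) (G : 'M[R]_n) :
  \tr (diag_mx d *m G) = \sum_j d 0 j * G j j.
Proof. by rewrite mul_diag_mx /mxtrace; apply: eq_bigr => j _; rewrite mxE. Qed.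

Definition lam (R : realType) n (C Z : 'M[R]_n) : 'rV[R]_n := \row_j (Z *m C) j j.
Definition Smx (R : realType) n (C Z : 'M[R]_n) := diag_mx (lam C Z) - C.

Lemma sum_lam (R : realType) n (C Z : 'M[R]_n) :
  \sum_j lam C Z 0 j = \tr (C *m Z).
Proof. by rewrite mxtrace_mulC /mxtrace; apply: eq_bigr => j _; rewrite mxE. Qed.

Lemma factA (R : realType) n (C Z G : 'M[R]_n) :
  primal_optimal C Z -> primal_feasible G -> 0 <= \tr (Smx C Z *m G).
Proof.
move=> [_ opt] [Gd pG]; have := opt G (conj Gd pG).
rewrite /frob /Smx mulmxBl linearB /= tr_diag_mul subr_ge0.
under eq_bigr do rewrite Gd mulr1.
by rewrite sum_lam.
Qed.

Lemma trSZ (R : realType) n (C Z : 'M[R]_n) :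
  primal_feasible Z -> \tr (Smx C Z *m Z) = 0.
Proof.
move=> [Zd _]; rewrite /Smx mulmxBl linearB /= tr_diag_mul.
under eq_bigr do rewrite Zd mulr1.
by rewrite sum_lam subrr.
Qed.

Lemma bf_mulA (R : realType) n (A B : 'M[R]_n) x y :
  bf (A *m B) x y = bf B (A^T *m x) y.
Proof. by rewrite /bf trmx_mul trmxK !mulmxA. Qed.

Lemma bf_congr (R : realType) n (F Z : 'M[R]_n) x y :
  bf (F^T *m Z *m F) x y = bf Z (F *m x) (F *m y).
Proof. by rewrite /bf trmx_mul !mulmxA. Qed.

Lemma delta11 (R : realType) : (delta_mx 0 0 : 'M[R]_1) = 1%:M.
Proof. by apply/matrixP => a b; rewrite (ord1 a) (ord1 b) !mxE. Qed.

Lemma Smx_sym (R : realType) n (C Z : 'M[R]_n) : C^T = C -> (Smx C Z)^T = Smx C Z.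
Proof. by move=> sC; rewrite /Smx linearB /= tr_diag_mx sC. Qed.

Lemma ZS_diag (R : realType) n (C Z : 'M[R]_n) i :
  primal_feasible Z -> (Z *m Smx C Z) i i = 0.
Proof.
move=> [Zd _]; rewrite /Smx mulmxBr mul_mx_diag !mxE Zd mul1r.
by rewrite subrr.
Qed.

Lemma step3_real (R : realType) (rho sig : R) :
  0 <= rho ->
  (let a := (`|sig| + 1)^-1 in let D := 1 + a ^+ 2 * rho in
   let cc := (1 - a ^+ 2 * rho) / D in let ss := 2 * a / D in
   0 <= - (2 * ss * rho) + sig * ((cc - 1) ^+ 2 + ss ^+ 2 * rho)) ->
  rho = 0.
Proof.
move=> r0 /=.
set a := (`|sig| + 1)^-1.
have a0 : 0 < a by rewrite invr_gt0 ltr_pwDr // normr_ge0.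
have asig : a * sig < 1.
  rewrite /a mulrC -ltr_pdivlMr ?ltr_pwDr ?normr_ge0 // div1r invrK.
  by apply: (le_lt_trans (ler_norm sig)); rewrite ltrDl ltr01.
set D := 1 + a ^+ 2 * rho.
have D0 : 0 < D by rewrite /D ltr_pwDl // mulr_ge0 // sqr_ge0.
have E : - (2 * (2 * a / D) * rho) + sig * (((1 - a ^+ 2 * rho) / D - 1) ^+ 2 + (2 * a / D) ^+ 2 * rho)
   = 4 * a * rho * (a * sig - 1) / D.
  rewrite /D; field; rewrite -/D; exact: lt0r_neq0.
rewrite E => H.
apply/eqP; rewrite eq_le r0 andbT.
have : 0 <= 4 * a * rho * (a * sig - 1).
  by move: H; rewrite pmulr_lge0 ?invr_gt0.
move=> H2.
have p : 0 < 4 * a * (1 - a * sig) by rewrite mulr_gt0 ?mulr_gt0 // subr_gt0.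
have : rho * (4 * a * (1 - a * sig)) <= 0.
  by rewrite -oppr_ge0; apply: (le_trans H2); rewrite le_eqVlt; apply/orP; left; apply/eqP; ring.
by rewrite pmulr_lle0.
Qed.

Lemma tr_pert (R : realType) n (S Z : 'M[R]_n) (e d : 'cV[R]_n) :
  S^T = S -> Z^T = Z -> \tr (S *m Z) = 0 ->
  \tr (S *m ((1%:M + e *m d^T) *m Z *m (1%:M + d *m e^T)))
    = 2 * bf Z (S *m e) d + bf S e e * bf Z d d.
Proof.
move=> sS sZ tSZ.
have h4 : e *m d^T *m Z *m (d *m e^T) = bf Z d d *: (e *m e^T).
  have -> : e *m d^T *m Z *m (d *m e^T) = e *m (d^T *m Z *m d) *m e^T.
    by rewrite !mulmxA.
  by rewrite [d^T *m Z *m d]mx11_scalar mul_mx_scalar -scalemxAl.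
have -> : (1%:M + e *m d^T) *m Z *m (1%:M + d *m e^T)
   = Z + Z *m d *m e^T + e *m (d^T *m Z) + bf Z d d *: (e *m e^T).
  rewrite mulmxDl mul1mx !mulmxDr !mulmx1 mulmxDl -h4 !mulmxA.
  by rewrite !addrA; congr (_ + _); rewrite addrAC.
rewrite !mulmxDr !mxtraceD tSZ add0r.
have t2 : \tr (S *m (Z *m d *m e^T)) = bf Z (S *m e) d.
  rewrite !mulmxA mxtrace_mulC trace_mx11 !mulmxA.
  by rewrite /bf trmx_mul sS ?mulmxA.
have t3 : \tr (S *m (e *m (d^T *m Z))) = bf Z (S *m e) d.
  rewrite mulmxA mxtrace_mulC trace_mx11 -mulmxA mulmxA -/(bf Z d (S *m e)).
  by rewrite bf_sym.
rewrite t2 t3 -scalemxAr linearZ /= tr_rank1; ring.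
Qed.

Lemma ZS0 (R : realType) n (C Z : 'M[R]_n) :
  C^T = C -> primal_optimal C Z -> Z *m Smx C Z = 0.
Proof.
move=> sC opt; have [[Zd pZ] _] := opt.
set S := Smx C Z.
have sS : S^T = S by apply: Smx_sym.
have sZ : Z^T = Z by case: pZ.
have key : forall i, Z *m col i S = 0.
  move=> i; set s := col i S; set e := (delta_mx i 0 : 'cV[R]_n).
  set rho := bf Z s s.
  have r0 : 0 <= rho by case: pZ => _ h; apply: h.
  apply: psd_col0 => //.
  apply: (step3_real (sig := S i i) r0) => /=.
  set a := (`|S i i| + 1)^-1.
  have a0 : 0 < a by rewrite invr_gt0 ltr_pwDr // normr_ge0.
  set D := 1 + a ^+ 2 * rho.
  have D0 : D != 0 by rewrite gt_eqF // /D ltr_pwDl // mulr_ge0 // sqr_ge0.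
  set cc := (1 - a ^+ 2 * rho) / D.
  set ss := 2 * a / D.
  set d := (cc - 1) *: e + ss *: (- s).
  set F := (1%:M + d *m e^T : 'M[R]_n).
  have Zes : bf Z e s = 0.
    rewrite bf_el /s colE mulmxA -colE mxE; exact: ZS_diag.
  have Zse : bf Z s e = 0 by rewrite bf_sym.
  have Zee : bf Z e e = 1 by rewrite bf_ee Zd.
  have feas : primal_feasible (F^T *m Z *m F).
    split; last exact: psd_congr.
    move=> j; rewrite -bf_ee bf_congr.
    have Fe : F *m delta_mx j 0 = delta_mx j 0 + (i == j)%:R *: d.
      rewrite /F mulmxDl mul1mx -mulmxA trmx_delta mul_delta_mx_cond.
      by case: eqP => _; rewrite ?delta11 ?mulmx1 ?scale1r ?mulr0n ?mulmx0 ?scale0r.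
    rewrite Fe; have [<-|ij] := eqVneq i j; last by rewrite scale0r addr0 bf_ee Zd.
    rewrite scale1r /d -/e !(bfDl, bfDr, bfZl, bfZr, bfNl, bfNr) Zes Zse Zee -/rho.
    have ccss : cc ^+ 2 + ss ^+ 2 * rho = 1.
      rewrite /cc /ss /D; field; exact: D0.
    move: ccss; clearbody cc ss rho; move=> ccss.
    nra.
  have := factA opt feas.
  have -> : F^T = 1%:M + e *m d^T.
    by rewrite /F linearD /= trmx1 trmx_mul trmxK.
  rewrite /F -/S tr_pert //; last exact: trSZ.
  have -> : S *m e = s by rewrite /s colE.
  rewrite bf_ee /d !(bfDl, bfDr, bfZl, bfZr, bfNl, bfNr) Zes Zse Zee -/rho.
  clearbody cc ss rho; nra.
have ZS : Z *m S = 0.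
  apply/matrixP => k i; rewrite [RHS]mxE.
  move: (key i); rewrite colE mulmxA -colE => /matrixP/(_ k 0).
  by rewrite !mxE.
exact: ZS.
Qed.

Lemma delta_facts (R : realType) (q K X : R) :
  q < 0 -> 0 <= K -> 0 <= X ->
  let dl := - q / ((- q + K + 1) * (X + 1)) in
  [/\ 0 < dl, dl * (X + 1) <= 1 & dl * K + q < 0].
Proof.
move=> q0 K0 X0 dl.
have A0 : 0 < - q + K + 1 by lra.
have B0 : 0 < X + 1 by lra.
have hd : dl * ((- q + K + 1) * (X + 1)) = - q.
  by rewrite /dl divfK // mulf_neq0 // gt_eqF.
have d0 : 0 < dl by rewrite /dl divr_gt0 ?mulr_gt0 // oppr_gt0.
split => //.
  have : dl * (X + 1) * (- q + K + 1) <= 1 * (- q + K + 1).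
    rewrite -mulrA (mulrC (X + 1)) hd mul1r. lra.
  by rewrite ler_pM2r.
have p1 : 0 <= dl * K * X by rewrite mulr_ge0 // mulr_ge0 // ltW.
have p2 : 0 < dl * (- q + 1) * (X + 1).
  by apply: mulr_gt0 => //; apply: mulr_gt0 => //; lra.
move: hd p1 p2; clearbody dl; move=> hd p1 p2.
nra.
Qed.

Lemma tr_shift (R : realType) n (S Z E : 'M[R]_n) :
  Z *m S = 0 -> S *m Z = 0 ->
  \tr (S *m ((E + 1%:M) *m Z *m (E + 1%:M))) = \tr (S *m (E *m Z *m E)).
Proof.
move=> ZS SZ.
have e1 : \tr (S *m (E *m Z)) = 0.
  by rewrite mulmxA mxtrace_mulC mulmxA ZS mul0mx mxtrace0.
have e2 : \tr (S *m (Z *m E)) = 0 by rewrite mulmxA SZ mul0mx mxtrace0.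
have e3 : \tr (S *m Z) = 0 by rewrite SZ mxtrace0.
rewrite mulmxDl mul1mx !mulmxDr mulmx1 mulmxDl !mulmxDr !mxtraceD.
by rewrite -!mulmxA e1 e2 e3 !addr0.
Qed.

Lemma tr_SEZE (R : realType) n (S Z : 'M[R]_n) (ec : 'rV[R]_n) :
  \tr (S *m (diag_mx ec *m Z *m diag_mx ec))
    = \sum_j \sum_k S j k * (ec 0 k * Z k j * ec 0 j).
Proof.
rewrite /mxtrace; apply: eq_bigr => j _; rewrite mxE; apply: eq_bigr => k _.
by rewrite mul_mx_diag mxE mul_diag_mx mxE.
Qed.

Lemma le_sum_term (R : realType) n (f : 'I_n -> R) j :
  (forall k, 0 <= f k) -> f j <= \sum_k f k.
Proof. by move=> h; rewrite (bigD1 j) //= lerDl sumr_ge0. Qed.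

Lemma diag_congr_entry (R : realType) n (c : 'rV[R]_n) (Z : 'M[R]_n) j k :
  (diag_mx c *m Z *m diag_mx c) j k = c 0 j * Z j k * c 0 k.
Proof. by rewrite mul_mx_diag mxE mul_diag_mx mxE. Qed.

Lemma rank1_entry (R : realType) n (y : 'cV[R]_n) j k :
  (y *m y^T) j k = y j 0 * y k 0.
Proof. by rewrite mxE big_ord1 mxE. Qed.

Lemma addmx_entry (R : realType) n (A B : 'M[R]_n) j k :
  (A + B) j k = A j k + B j k.
Proof. by rewrite mxE. Qed.

Lemma rearr (R : realType) (a b c d : R) :
  a * (d * b * (d * c)) = d ^+ 2 * (a * (b * c)).
Proof. ring. Qed.

Lemma S_psd (R : realType) n (C Z : 'M[R]_n) :
  C^T = C -> primal_optimal C Z -> psd (Smx C Z).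
Proof.
move=> sC opt; have [[Zd pZ] _] := opt.
have ZS := ZS0 sC opt.
set S := Smx C Z in ZS *.
have sS : S^T = S by apply: Smx_sym.
have sZ : Z^T = Z by case: pZ.
have SZ : S *m Z = 0.
  have : (Z *m S)^T = 0 by rewrite ZS trmx0.
  by rewrite trmx_mul sS sZ.
split => // x.
rewrite leNgt; apply/negP => qneg.
rewrite -/(bf S x x) in qneg.
set q := bf S x x in qneg.
set X := \sum_j x j 0 ^+ 2.
set K := \sum_j \sum_k `|S j k * Z k j| * (x k 0 ^+ 2 * x j 0 ^+ 2).
have X0 : 0 <= X by apply: sumr_ge0 => j _; apply: sqr_ge0.
have K0 : 0 <= K.
  apply: sumr_ge0 => j _; apply: sumr_ge0 => k _.
  by rewrite mulr_ge0 ?normr_ge0 // mulr_ge0 // sqr_ge0.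
have [d0 dX dK] := delta_facts qneg K0 X0.
set dl := - q / _ in d0 dX dK.
have t0 : forall j, 0 <= dl * x j 0 ^+ 2 by move=> j; apply: mulr_ge0; [exact: ltW | exact: sqr_ge0].
have t1 : forall j, dl * x j 0 ^+ 2 <= 1.
  move=> j; apply: le_trans dX; rewrite ler_pM2l //.
  apply: (@le_trans _ _ X); last by rewrite lerDl ler01.
  exact: (@le_sum_term R n (fun k => x k 0 ^+ 2) j (fun k => sqr_ge0 _)).
set cv := \row_j Num.sqrt (1 - dl * x j 0 ^+ 2).
have c2 : forall j, cv 0 j ^+ 2 = 1 - dl * x j 0 ^+ 2.
  by move=> j; rewrite mxE sqr_sqrtr // subr_ge0.
have cge0 : forall j, 0 <= cv 0 j by move=> j; rewrite mxE sqrtr_ge0.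
have cle1 : forall j, cv 0 j <= 1.
  move=> j; rewrite mxE -[X in _ <= X](sqrtr1 R); apply: ler_wsqrtr.
  by have := t0 j; lra.
set ec := \row_j (cv 0 j - 1).
have eb : forall j, `|ec 0 j| <= dl * x j 0 ^+ 2.
  move=> j; rewrite mxE ler0_norm ?subr_le0 //.
  have := c2 j; have := cge0 j; have := cle1 j; nra.
set F := diag_mx cv.
set y := Num.sqrt dl *: x.
have sd : Num.sqrt dl * Num.sqrt dl = dl by rewrite -expr2 sqr_sqrtr // ltW.
have FE : F = diag_mx ec + 1%:M.
  apply/matrixP => a b; rewrite !mxE.
  by case: (eqVneq a b) => [->|ab]; rewrite ?mulr1n ?mulr0n ?subrK ?addr0.
have FT : F^T = F by rewrite tr_diag_mx.
set G := F^T *m Z *m F + y *m y^T.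
have feas : primal_feasible G.
  split; last by apply: psd_add; [exact: psd_congr | exact: psd_rank1].
  move=> j; rewrite /G FT addmx_entry diag_congr_entry rank1_entry Zd.
  have yj : y j 0 = Num.sqrt dl * x j 0 by rewrite mxE.
  rewrite yj; have := c2 j; move: sd; clearbody y cv; nra.
have A := factA opt feas.
rewrite /G mulmxDr mxtraceD FT FE tr_shift // tr_SEZE tr_rank1 in A.
rewrite /y bfZl bfZr mulrA sd -/q in A.
have B : \sum_j \sum_k S j k * (ec 0 k * Z k j * ec 0 j) <= dl ^+ 2 * K.
  rewrite /K mulr_sumr; apply: ler_sum => j _.
  rewrite mulr_sumr; apply: ler_sum => k _.
  apply: le_trans (ler_norm _) _.
  have -> : S j k * (ec 0 k * Z k j * ec 0 j) = (S j k * Z k j) * (ec 0 k * ec 0 j).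
    by rewrite [ec 0 k * _]mulrC -!mulrA.
  rewrite normrM [`|ec 0 k * _|]normrM.
  apply: (le_trans (ler_wpM2l (normr_ge0 _) (ler_pM (normr_ge0 _) (normr_ge0 _) (eb k) (eb j)))).
  rewrite le_eqVlt; apply/orP; left; apply/eqP.
  exact: rearr.
have : 0 <= dl * (dl * K + q).
  by rewrite mulrDr mulrA -expr2; apply: le_trans A _; rewrite lerD2r.
by rewrite pmulr_rge0 // leNgt dK.
Qed.

Lemma w_lam (R : realType) n (C Z : 'M[R]_n) :
  C^T = C -> primal_optimal C Z -> w_of C Z = lam C Z.
Proof.
move=> sC opt; have [[Zd pZ] _] := opt.
have ZS := ZS0 sC opt.
have ZC : Z *m C = Z *m diag_mx (lam C Z).
  by apply/eqP; rewrite eq_sym -subr_eq0 -mulmxBr; apply/eqP.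
apply/matrixP => a i; rewrite (ord1 a) [LHS]mxE.
have hc : Z *m col i C = lam C Z 0 i *: col i Z.
  rewrite colE mulmxA ZC; apply/matrixP => k l.
  by rewrite (ord1 l) -colE mul_mx_diag !mxE mulrC.
rewrite -mulmxA hc -scalemxAr [X in X / _]mxE.
set den := ((col i Z)^T *m col i Z) 0 0.
have den1 : 1 <= den.
  rewrite /den mxE (bigD1 i) //= !mxE (Zd i) mulr1.
  set s := \sum_(_ < _ | _) _.
  have : 0 <= s by apply: sumr_ge0 => k _; rewrite !mxE -expr2; exact: sqr_ge0.
  lra.
by rewrite mulfK // gt_eqF // (lt_le_trans ltr01 den1).
Qed.

Unset Implicit Arguments.

Theorem lemmaC1 (R : realType) (n : nat) (C Z : 'M[R]_n) :
  C^T = C -> primal_optimal C Z -> dual_optimal C (w_of C Z).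
Proof.
move=> sC opt; rewrite w_lam //.
have [[Zd pZ] _] := opt.
split; first exact: S_psd.
move=> w' pw'; rewrite /ones_dot sum_lam.
have := tr_psd_ge0 pw' pZ.
rewrite mulmxBl linearB /= tr_diag_mul subr_ge0.
move=> h; apply: (le_trans h); rewrite le_eqVlt; apply/orP; left; apply/eqP.
by apply: eq_bigr => j _; rewrite Zd mulr1.
Qed.
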